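(* For every triple $XYZ\in\{I,S\}^3$, the set of contexts $\mathrm{ST}_{XYZ}$ of the uniform evaluator $XYZ$ is uniform, i.e. for all contexts $C_1,C_2$, $C_1(C_2)\in\mathrm{ST}_{XYZ}$ if and only if $C_1\in\mathrm{ST}_{XYZ}$ and $C_2\in\mathrm{ST}_{XYZ}$.
   Context: Terms: $\Lambda ::= x\mid\lambda x.\Lambda\mid\Lambda\Lambda$; $[N/x]B$ is capture-avoiding substitution; a redex is a term $(\lambda x.B)N$. An evaluator is a partial function $\Lambda\rightharpoonup\Lambda$ given by inference rules; it is undefined (diverges) on $M$ when there is no finite derivation; $\mathrm{id}$ is the identity evaluator. Eval-apply template: given evaluators $la,op_1,ar_1,op_2,ar_2$ (which may be the evaluator $ea$ being defined), $ea$ is defined by: (var) $ea(x)=x$; (abs) $ea(\lambda x.B)=\lambda x.B'$ if $la(B)=B'$; (con) $ea(MN)=B'$ if $op_1(M)=\lambda x.B$, $ar_1(N)=N'$ and $ea([N'/x]B)=B'$; (neu) $ea(MN)=M''N'$ if $op_1(M)=M'$, $M'$ is not an abstraction, $op_2(M')=M''$ and $ar_2(N)=N'$. Premises are evaluated left to right; each use of (con) contracts the redex $(\lambda x.B)N'$; reading these contractions in in-order traversal of the (possibly infinite) derivation, each located at its position in the whole current term, gives the evaluation sequence of $ea$ on the input. Uniform evaluator with code $XYZ\in\{I,S\}^3$: the instance of the template with $op_1=ea$, $op_2=\mathrm{id}$, and $la$ (resp. $ar_1$, $ar_2$) equal to $ea$ itself if $X$ (resp. $Y$, $Z$) is $S$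 and to $\mathrm{id}$ if it is $I$. A context is a term with one hole $\Box$; $C(R)$ replaces the hole by $R$, $C_1(C_2)$ replaces the hole of $C_1$ by context $C_2$. The set of contexts $\mathrm{ST}_e$ of an evaluator $e$ is the set of all contexts $C$ such that, for some input term, at some step of the evaluation sequence of $e$ the current term is $C(R)$ with $R$ the redex contracted at that step. *)

(* Defs.v *)
From Stdlib Require Import Arith.

Inductive term : Type :=
| Var : nat -> term
| Lam : term -> term
| App : term -> term -> term.

Fixpoint lift (k : nat) (t : term) : term :=
  match t with
  | Var n => if n <? k then Var n else Var (S n)
  | Lam b => Lam (lift (S k) b)
  | App a b => App (lift k a) (lift k b)
  end.

Fixpoint liftn (n : nat) (t : term) : term :=
  match n with
  | O => t
  | S m => lift 0 (liftn m t)
  end.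

Fixpoint subst (k : nat) (u : term) (t : term) : term :=
  match t with
  | Var n => if n <? k then Var n
             else if n =? k then liftn k u
             else Var (pred n)
  | Lam b => Lam (subst (S k) u b)
  | App a b => App (subst k u a) (subst k u b)
  end.

Definition beta_subst (B N : term) : term := subst 0 N B.

Definition is_abs (t : term) : Prop :=
  match t with Lam _ => True | _ => False end.

Inductive ctx : Type :=
| Hole : ctx
| CLam : ctx -> ctx
| CAppL : ctx -> term -> ctx
| CAppR : term -> ctx -> ctx.

(** C(R): hole replaced by R (capturing, as usual for contexts). *)
Fixpoint plug (C : ctx) (R : term) : term :=
  match C with
  | Hole => R
  | CLam C' => Lam (plug C' R)
  | CAppL C' N => App (plug C' R) N
  | CAppR M C' => App M (plug C' R)
  end.

Fixpoint ccomp (C1 C2 : ctx) : ctx :=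
  match C1 with
  | Hole => C2
  | CLam C' => CLam (ccomp C' C2)
  | CAppL C' N => CAppL (ccomp C' C2) N
  | CAppR M C' => CAppR M (ccomp C' C2)
  end.

(** A letter of the code XYZ : I means the identity evaluator, S means ea itself. *)
Inductive letter : Type := LI | LS.

(** Big-step (finite derivation) semantics of the uniform evaluator XYZ:
    instance of the eval-apply template with op1 = ea, op2 = id,
    la / ar1 / ar2 = ea or id according to X / Y / Z.
    A premise "e(P) = P'" with e selected by letter L is rendered as
    (L = LI /\ P' = P) \/ (L = LS /\ eval P P'). *)
Inductive eval (X Y Z : letter) : term -> term -> Prop :=
| ev_var : forall n, eval X Y Z (Var n) (Var n)
| ev_abs : forall B B',
    (X = LI /\ B' = B \/ X = LS /\ eval X Y Z B B') ->
    eval X Y Z (Lam B) (Lam B')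
| ev_con : forall M N B N' B',
    eval X Y Z M (Lam B) ->
    (Y = LI /\ N' = N \/ Y = LS /\ eval X Y Z N N') ->
    eval X Y Z (beta_subst B N') B' ->
    eval X Y Z (App M N) B'
| ev_neu : forall M N M' N',
    eval X Y Z M M' -> ~ is_abs M' ->
    (Z = LI /\ N' = N \/ Z = LS /\ eval X Y Z N N') ->
    eval X Y Z (App M N) (App M' N').

(** [step X Y Z M K R]: in the evaluation sequence of the uniform evaluator
    XYZ on input M (read off, in in-order traversal, from its possibly
    infinite derivation, premises evaluated left to right), there is a step
    at which the current term is plug K R and R is the contracted redex.
    The identity evaluator performs no steps. *)
Inductive step (X Y Z : letter) : term -> ctx -> term -> Prop :=
| st_abs : forall B K R,
    X = LS -> step X Y Z B K R ->
    step X Y Z (Lam B) (CLam K) R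
| st_op1 : forall M N K R,
    step X Y Z M K R ->
    step X Y Z (App M N) (CAppL K N) R
| st_ar1 : forall M N B K R,
    eval X Y Z M (Lam B) ->
    Y = LS -> step X Y Z N K R ->
    step X Y Z (App M N) (CAppR (Lam B) K) R
| st_con : forall M N B N',
    eval X Y Z M (Lam B) ->
    (Y = LI /\ N' = N \/ Y = LS /\ eval X Y Z N N') ->
    step X Y Z (App M N) Hole (App (Lam B) N')
| st_body : forall M N B N' K R,
    eval X Y Z M (Lam B) ->
    (Y = LI /\ N' = N \/ Y = LS /\ eval X Y Z N N') ->
    step X Y Z (beta_subst B N') K R ->
    step X Y Z (App M N) K R
| st_ar2 : forall M N M' K R,
    eval X Y Z M M' -> ~ is_abs M' ->
    Z = LS -> step X Y Z N K R ->
    step X Y Z (App M N) (CAppR M' K) R.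

Definition ST (X Y Z : letter) (C : ctx) : Prop :=
  exists M R, step X Y Z M C R.

Definition uniform_ctx_set (P : ctx -> Prop) : Prop :=
  forall C1 C2 : ctx, P (ccomp C1 C2) <-> (P C1 /\ P C2).

(* Main.v *)
Require Import Defs.

Section S.
Variables X Y Z : letter.

Fixpoint good (C : ctx) : Prop :=
  match C with
  | Hole => True
  | CLam K => X = LS /\ good K
  | CAppL K _ => good K
  | CAppR M K => good K /\
      ((exists P B, M = Lam B /\ eval X Y Z P (Lam B) /\ Y = LS) \/
       (exists P, eval X Y Z P M /\ ~ is_abs M /\ Z = LS))
  end.

Lemma step_good : forall M C R, step X Y Z M C R -> good C.
Proof.
  induction 1; simpl; auto.
  - split; [exact IHstep|]. left. exists M, B. auto.
  - split; [exact IHstep|]. right. exists M. auto.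
Qed.

Lemma hole_st : exists M R, step X Y Z M Hole R.
Proof.
  assert (HL : eval X Y Z (Lam (Var 0)) (Lam (Var 0))).
  { apply ev_abs. destruct X; [left|right]; split; auto. apply ev_var. }
  assert (HN : Y = LI /\ Var 0 = Var 0 \/ Y = LS /\ eval X Y Z (Var 0) (Var 0)).
  { destruct Y; [left|right]; split; auto. apply ev_var. }
  eexists; eexists. eapply st_con; eauto.
Qed.

Lemma good_st : forall C, good C -> exists M R, step X Y Z M C R.
Proof.
  induction C; simpl; intros H.
  - apply hole_st.
  - destruct H as [HX H]. destruct (IHC H) as (M & R & HS).
    exists (Lam M), R. apply st_abs; auto.
  - destruct (IHC H) as (M & R & HS). exists (App M t), R. apply st_op1; auto.
  - destruct H as [H [(P & B & -> & HP & HY) | (P & HP & HA & HZ)]];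
      destruct (IHC H) as (M & R & HS).
    + exists (App P M), R. eapply st_ar1; eauto.
    + exists (App P M), R. eapply st_ar2; eauto.
Qed.

Lemma good_comp : forall C1 C2, good (ccomp C1 C2) <-> good C1 /\ good C2.
Proof.
  induction C1; intros C2; simpl.
  - tauto.
  - rewrite IHC1. tauto.
  - apply IHC1.
  - rewrite IHC1. tauto.
Qed.
End S.

Theorem mainTheorem2 :
  forall X Y Z : letter, uniform_ctx_set (ST X Y Z).
Proof.
  intros X Y Z C1 C2.
  assert (E : forall C, ST X Y Z C <-> good X Y Z C).
  { intros C; split.
    - intros (M & R & H). eapply step_good; eauto.
    - apply good_st. }
  rewrite !E. apply good_comp.
Qed.
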